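(* Let $Q>1$ be real, and let $k\ge0$ and $\ell\ge1$ be integers. Define power series $$\mathcal F_1(x)=(-Qx)_k\sum_{p=1}^\infty\left[{k+p\atop k+1}\right]\frac{(-x)^p}{Q^{\ell+p}-1},\qquad \mathcal F_2(x)=\left[{k\atop\ell}\right](1+x)^{-1}-\sum_{s=0}^{k-\ell}Q^{\binom{s+1}{2}+\ell s}\left[{k\atop \ell+s}\right]x^s.$$ Then $$\mathcal F_2(x)=-\frac{(Q)_{k+1}}{(Q)_\ell\,(Q)_{k-\ell}}\,\mathcal F_1(x).$$
   Context: Here $Q=q_{\mathbf{n}_{m-1}}=q^{n_0\cdots n_{m-1}}$ in the paper, but only $Q>1$ matters. Notation: $(x)_0=1$ and $(x)_n=(1-x)(1-Qx)\cdots(1-Q^{n-1}x)$ for $n\ge1$, so $(Q)_n=\prod_{j=1}^n(1-Q^j)$ and $(-Qx)_k=\prod_{j=1}^k(1+Q^jx)$; the $Q$-binomial coefficient is $\left[{k\atop r}\right]=\frac{(Q)_k}{(Q)_r(Q)_{k-r}}$ for $0\le r\le k$, with the conventions $\left[{k\atop r}\right]=0$ unless $0\le r\le k$, $1/(Q)_j=0$ for $j<0$, and an empty sum equal to $0$. *)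

(* Defs.v *)
From mathcomp Require Import all_boot all_order all_algebra.
Set Implicit Arguments. Unset Strict Implicit. Unset Printing Implicit Defensive.
Import Order.TTheory GRing.Theory Num.Theory.
Local Open Scope ring_scope.

(* Formal power series in x over R are represented by their coefficient
   sequences nat -> R. *)

Definition qpoch {R : realFieldType} (Q : R) (n : nat) : R :=
  \prod_(1 <= j < n.+1) (1 - Q ^+ j).

Definition qbinom {R : realFieldType} (Q : R) (k r : nat) : R :=
  if (r <= k)%N then qpoch Q k / (qpoch Q r * qpoch Q (k - r)) else 0.

Definition negQpoch {R : realFieldType} (Q : R) (k : nat) : {poly R} :=
  \prod_(1 <= j < k.+1) (1 + Q ^+ j *: 'X).

Definition cauchy {R : realFieldType} (a b : nat -> R) (n : nat) : R :=
  \sum_(i < n.+1) a i * b (n - i)%N.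

Definition F1sum {R : realFieldType} (Q : R) (k l : nat) (p : nat) : R :=
  if p == 0%N then 0
  else qbinom Q (k + p) k.+1 * (-1) ^+ p / (Q ^+ (l + p) - 1).

Definition F1 {R : realFieldType} (Q : R) (k l : nat) : nat -> R :=
  cauchy (fun i => (negQpoch Q k)`_i) (F1sum Q k l).

Definition F2 {R : realFieldType} (Q : R) (k l : nat) (n : nat) : R :=
  qbinom Q k l * (-1) ^+ n
  - (if (l <= k)%N && (n <= k - l)%N
     then Q ^+ ('C(n.+1, 2) + l * n) * qbinom Q k (l + n)
     else 0).

(* (Q)_{k+1} / ((Q)_l (Q)_{k-l}), with 1/(Q)_j = 0 for j < 0 *)
Definition Fconst {R : realFieldType} (Q : R) (k l : nat) : R :=
  if (l <= k)%N then qpoch Q k.+1 / (qpoch Q l * qpoch Q (k - l)) else 0.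

(* Main.v *)
Require Import Defs.
From mathcomp Require Import all_boot all_order all_algebra.
From mathcomp Require Import ring lra zify.
Set Implicit Arguments. Unset Strict Implicit. Unset Printing Implicit Defensive.
Import Order.TTheory GRing.Theory Num.Theory.
Local Open Scope ring_scope.

Lemma qpoch0 (R : realFieldType) (Q : R) : qpoch Q 0 = 1.
Proof. by rewrite /qpoch big_geq. Qed.

Lemma qpochS (R : realFieldType) (Q : R) n :
  qpoch Q n.+1 = qpoch Q n * (1 - Q ^+ n.+1).
Proof. by rewrite /qpoch big_nat_recr. Qed.

Lemma fac_neq0 (R : realFieldType) (Q : R) n : 1 < Q -> (n > 0)%N -> 1 - Q ^+ n != 0.
Proof.
move=> hQ hn; have := exprn_egt1 n hQ; rewrite -lt0n hn => h.
by rewrite subr_eq0 eq_sym gt_eqF.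
Qed.

Lemma qpoch_neq0 (R : realFieldType) (Q : R) n : 1 < Q -> qpoch Q n != 0.
Proof.
move=> hQ; elim: n => [|n IH]; first by rewrite qpoch0 oner_neq0.
by rewrite qpochS mulf_neq0 // fac_neq0.
Qed.

Lemma qbinomE (R : realFieldType) (Q : R) n j : (j <= n)%N ->
  qbinom Q n j = qpoch Q n / (qpoch Q j * qpoch Q (n - j)).
Proof. by move=> h; rewrite /qbinom h. Qed.

Lemma qbinom0 (R : realFieldType) (Q : R) n j : (n < j)%N -> qbinom Q n j = 0.
Proof. by move=> h; rewrite /qbinom leqNgt h. Qed.

Lemma qbinomnn (R : realFieldType) (Q : R) n : 1 < Q -> qbinom Q n n = 1.
Proof.
move=> hQ; rewrite qbinomE // subnn qpoch0 mulr1 divff //. exact: qpoch_neq0.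
Qed.

Lemma qbinomn0 (R : realFieldType) (Q : R) n : 1 < Q -> qbinom Q n 0 = 1.
Proof.
move=> hQ; rewrite qbinomE // subn0 qpoch0 mul1r divff //. exact: qpoch_neq0.
Qed.

Lemma qpascal1 (R : realFieldType) (Q : R) n j : 1 < Q ->
  qbinom Q n.+1 j.+1 = qbinom Q n j + Q ^+ j.+1 * qbinom Q n j.+1.
Proof.
move=> hQ.
case: (ltnP n j) => hnj.
  rewrite [qbinom Q n.+1 _]qbinom0 ?[qbinom Q n j]qbinom0 ?[qbinom Q n j.+1]qbinom0 ?mulr0 ?addr0 //; lia.
case: (ltnP j n) => hjn; last first.
  have -> : j = n by apply/eqP; rewrite eqn_leq hnj hjn.
  by rewrite !qbinomnn // qbinom0 // mulr0 addr0.
have [m ->] : exists m, n = (j + m.+1)%N by exists (n - j.+1)%N; lia.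
rewrite !qbinomE; try lia.
have -> : ((j + m.+1).+1 - j.+1 = m.+1)%N by lia.
have -> : ((j + m.+1) - j = m.+1)%N by lia.
have -> : ((j + m.+1) - j.+1 = m)%N by lia.
rewrite (qpochS _ (j + m.+1)) (qpochS _ j) (qpochS _ m).
have -> : Q ^+ (j + m.+1).+1 = Q ^+ j.+1 * Q ^+ m.+1 by rewrite -exprD; congr (_ ^+ _); lia.
have h1 := qpoch_neq0 (j+m.+1) hQ. have h2 := qpoch_neq0 j hQ.
have h3 := qpoch_neq0 m hQ.
have h4 : 1 - Q ^+ j.+1 != 0 by apply: fac_neq0.
have h5 : 1 - Q ^+ m.+1 != 0 by apply: fac_neq0.
by field; do ?[apply/andP; split].
Qed.

Ltac nz := do ?[apply/andP; split]; first [assumption | by rewrite expf_neq0].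

Lemma Q1 (R : realFieldType) (Q : R) k l : 1 < Q -> (l <= k)%N ->
  qbinom Q k.+1 l = qbinom Q k l * (1 - Q ^+ k.+1) / (1 - Q ^+ (k.+1 - l)).
Proof.
move=> hQ hlk.
have [d ->] : exists d, k = (l + d)%N by exists (k - l)%N; lia.
rewrite !qbinomE; try lia.
have -> : ((l + d).+1 - l = d.+1)%N by lia.
have -> : ((l + d) - l = d)%N by lia.
rewrite (qpochS _ (l + d)) (qpochS _ d).
have h1 := qpoch_neq0 (l+d) hQ. have h2 := qpoch_neq0 l hQ.
have h3 := qpoch_neq0 d hQ.
have h4 : 1 - Q ^+ (l+d).+1 != 0 by apply: fac_neq0.
have h5 : 1 - Q ^+ d.+1 != 0 by apply: fac_neq0.
by field; nz.
Qed.

Lemma F2poly (R : realFieldType) (Q : R) k l n : 1 < Q -> (l <= k)%N ->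
  qbinom Q k.+1 (l + n.+1) =
  (Q ^+ (n.+1 + l) * qbinom Q k (l + n.+1) * (1 - Q ^+ k.+1 * Q ^+ n.+1)
   + Q ^+ k.+1 * (1 - Q ^+ n.+1) * qbinom Q k (l + n))
  / (Q ^+ (n.+1 + l) * (1 - Q ^+ (k.+1 - l))).
Proof.
move=> hQ hlk.
have hQ0 : Q != 0 by apply/negP => /eqP h; move: hQ; rewrite h ltr10.
have hc : 1 - Q ^+ (k.+1 - l) != 0 by apply: fac_neq0 => //; lia.
have hX : Q ^+ (n.+1 + l) != 0 by rewrite expf_neq0.
case: (ltnP k (l + n)) => h1.
  rewrite ![qbinom Q _ (l + _)]qbinom0 ?mulr0 ?addr0 ?mul0r //; lia.
case: (ltnP (l + n) k) => h2; last first.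
  have ek : k = (l + n)%N by lia.
  rewrite [qbinom Q k (l + n.+1)]qbinom0; last by lia.
  rewrite -ek qbinomnn // (_ : (l + n.+1 = k.+1)%N); last by lia.
  rewrite qbinomnn // mulr0 mul0r add0r mulr1.
  have -> : (k.+1 - l = n.+1)%N by lia.
  have -> : Q ^+ (n.+1 + l) = Q ^+ k.+1 by congr (_ ^+ _); lia.
  have hn : 1 - Q ^+ n.+1 != 0 by apply: fac_neq0.
  by field; nz.
have [m ek] : exists m, k = (l + n + m.+1)%N by exists (k - (l + n).+1)%N; lia.
rewrite !qbinomE; try lia.
have -> : (k.+1 - (l + n.+1) = m.+1)%N by lia.
have -> : (k - (l + n.+1) = m)%N by lia.
have -> : (k - (l + n) = m.+1)%N by lia.
have -> : (l + n.+1 = (l + n).+1)%N by lia.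
rewrite (qpochS _ k) (qpochS _ (l + n)) (qpochS _ m).
have -> : (k.+1 - l = (n + m).+2)%N by lia.
have e1 : Q ^+ k.+1 = Q ^+ l * Q ^+ n * Q ^+ m * Q ^+ 2.
  by rewrite -!exprD; congr (_ ^+ _); lia.
have e2 : Q ^+ (n + m).+2 = Q ^+ n * Q ^+ m * Q ^+ 2.
  by rewrite -!exprD; congr (_ ^+ _); lia.
have e3 : Q ^+ (l + n).+1 = Q ^+ l * Q ^+ n * Q.
  by rewrite exprSr exprD.
have e4 : Q ^+ (n.+1 + l) = Q ^+ l * Q ^+ n * Q.
  by rewrite -e3; congr (_ ^+ _); lia.
have e5 : Q ^+ n.+1 = Q ^+ n * Q by rewrite exprSr.
have e6 : Q ^+ m.+1 = Q ^+ m * Q by rewrite exprSr.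
have h3 := qpoch_neq0 k hQ. have h4 := qpoch_neq0 (l + n) hQ.
have h5 := qpoch_neq0 m hQ.
have h6 : 1 - Q ^+ (l + n).+1 != 0 by apply: fac_neq0.
have h7 : 1 - Q ^+ m.+1 != 0 by apply: fac_neq0.
have h8 : 1 - Q ^+ (n + m).+2 != 0 by apply: fac_neq0.
move: h6 h7 h8 hX; rewrite e1 e2 e3 e4 e5 e6 => h6 h7 h8 hX.
by field; nz.
Qed.

Definition bb (R : realFieldType) (Q : R) k l p := - Fconst Q k l * F1sum Q k l p.
Definition beta (R : realFieldType) (Q : R) l p :=
  if p is p'.+1 then (-1) ^+ p * qbinom Q (p' + l) l else 0.
Definition prev (R : realFieldType) (f : nat -> R) n :=
  if n is n'.+1 then f n' else 0.

Lemma Qpow_neq1 (R : realFieldType) (Q : R) n : 1 < Q -> (0 < n)%N -> Q ^+ n - 1 != 0.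
Proof.
move=> hQ hn; rewrite -opprB oppr_eq0; exact: fac_neq0.
Qed.

Lemma bbrec (R : realFieldType) (Q : R) k l p : 1 < Q -> (l <= k)%N ->
  (1 - Q ^+ (k.+1 - l)) * bb Q k.+1 l p = bb Q k l p * (1 - Q ^+ (p + k.+1)).
Proof.
move=> hQ hlk; rewrite /bb /F1sum /Fconst.
case: p => [|p]; first by rewrite /= ?mulr0 ?mul0r ?oppr0 ?mulr0.
rewrite /= hlk (leq_trans hlk (leqnSn k)).
have [d ->] : exists d, k = (l + d)%N by exists (k - l)%N; lia.
rewrite !qbinomE; try lia.
have -> : ((l + d).+1 - l = d.+1)%N by lia.
have -> : ((l + d) - l = d)%N by lia.
have -> : ((l + d).+1 + p.+1 - (l + d).+2 = p)%N by lia.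
have -> : ((l + d) + p.+1 - (l + d).+1 = p)%N by lia.
have -> : ((l + d).+1 + p.+1 = ((l + d) + p.+1).+1)%N by lia.
have -> : (p.+1 + (l + d).+1 = ((l + d) + p.+1).+1)%N by lia.
rewrite (qpochS _ (l + d + p.+1)) (qpochS _ (l + d).+1) (qpochS _ d).
have h1 := qpoch_neq0 (l+d) hQ. have h2 := qpoch_neq0 l hQ.
have h3 := qpoch_neq0 d hQ. have h3' := qpoch_neq0 p hQ.
have h3'' := qpoch_neq0 (l + d + p.+1) hQ.
have h3''' := qpoch_neq0 (l + d).+1 hQ.
have h4 : 1 - Q ^+ (l+d).+2 != 0 by apply: fac_neq0.
have h5 : 1 - Q ^+ d.+1 != 0 by apply: fac_neq0.
have h6 : Q ^+ (l + p.+1) - 1 != 0 by apply: Qpow_neq1 => //; lia.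
have h7 : 1 - Q ^+ (l + d + p.+1).+1 != 0 by apply: fac_neq0.
by field; nz.
Qed.

Lemma bb_base (R : realFieldType) (Q : R) l p : 1 < Q -> bb Q l l p = beta Q l p.
Proof.
move=> hQ; rewrite /bb /F1sum /Fconst /beta.
case: p => [|p]; first by rewrite eqxx mulr0.
rewrite /= leqnn subnn !qbinomE; try lia.
have -> : (l + p.+1 - l.+1 = p)%N by lia.
have -> : (p + l - l = p)%N by lia.
have -> : (l + p.+1 = (p + l).+1)%N by lia.
rewrite (qpochS _ (p + l)) (qpochS _ l) qpoch0.
have h1 := qpoch_neq0 (p + l) hQ. have h2 := qpoch_neq0 l hQ.
have h3 := qpoch_neq0 p hQ.
have h4 : 1 - Q ^+ l.+1 != 0 by apply: fac_neq0.
have h6 : Q ^+ (p + l).+1 - 1 != 0 by apply: Qpow_neq1.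
by field; nz.
Qed.

Lemma beta_rec (R : realFieldType) (Q : R) l p : 1 < Q ->
  beta Q l p = beta Q l.+1 p + prev (fun p => Q ^+ l.+1 * beta Q l.+1 p) p.
Proof.
move=> hQ; case: p => [|p] /=; first by rewrite addr0.
case: p => [|p] /=.
  by rewrite add0n !qbinomnn // mulr0 addr0.
rewrite (_ : (p.+1 + l.+1 = (p.+1 + l).+1)%N); last by lia.
rewrite qpascal1 // (_ : (p + l.+1 = p.+1 + l)%N); last by lia.
rewrite !exprS; ring.
Qed.

Lemma negQpoch0 (R : realFieldType) (Q : R) : negQpoch Q 0 = 1.
Proof. by rewrite /negQpoch big_geq. Qed.

Lemma negQpochS (R : realFieldType) (Q : R) k :
  negQpoch Q k.+1 = negQpoch Q k * (1 + Q ^+ k.+1 *: 'X).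
Proof. by rewrite /negQpoch big_nat_recr. Qed.

Lemma coefM1X (R : realFieldType) (a : {poly R}) c i :
  (a * (1 + c *: 'X))`_i = a`_i + c * prev (fun j => a`_j) i.
Proof.
rewrite mulrDr mulr1 -scalerAr coefD coefZ coefMX.
by case: i.
Qed.

Lemma L1a (R : realFieldType) (a : {poly R}) c b n :
  cauchy (fun i => (a * (1 + c *: 'X))`_i) b n =
  cauchy (fun i => a`_i) b n + c * prev (cauchy (fun i => a`_i) b) n.
Proof.
rewrite /cauchy.
under eq_bigr do rewrite coefM1X mulrDl.
rewrite big_split /=; congr (_ + _).
case: n => [|n] /=; first by rewrite big_ord1 /= !mulr0 mul0r.
rewrite big_ord_recl /= mulr0 mul0r add0r mulr_sumr.
by apply: eq_bigr => i _; rewrite add0n /bump /= add1n subSS mulrA.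
Qed.

Lemma L1b (R : realFieldType) (f : nat -> R) c b n :
  cauchy f (fun p => b p + prev (fun p => c * b p) p) n =
  cauchy f b n + c * prev (cauchy f b) n.
Proof.
rewrite /cauchy.
under eq_bigr do rewrite mulrDr.
rewrite big_split /=; congr (_ + _).
case: n => [|n] /=; first by rewrite big_ord1 /= !mulr0.
rewrite big_ord_recr /= subnn mulr0 addr0 mulr_sumr.
apply: eq_bigr => i _.
have -> : (n.+1 - i = (n - i).+1)%N by have := ltn_ord i; lia.
by rewrite /= mulrCA.
Qed.

Lemma eq_cauchy (R : realFieldType) (f b b' : nat -> R) n :
  (forall p, b p = b' p) -> cauchy f b n = cauchy f b' n.
Proof. by move=> h; rewrite /cauchy; apply: eq_bigr => i _; rewrite h. Qed.

Lemma EQ2 (R : realFieldType) (Q : R) k i :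
  (negQpoch Q k.+1)`_i = Q ^+ i * (negQpoch Q k * (1 + 1 *: 'X))`_i.
Proof.
elim: k i => [|k IH] i.
  rewrite negQpochS negQpoch0 !mul1r !coefD !coefZ coefX coef1.
  by case: i => [|[|i]] /=; rewrite ?expr0 ?expr1; ring.
rewrite [negQpoch Q k.+2]negQpochS !coefM1X.
case: i => [|i] /=; first by rewrite expr0 !mulr0 !addr0 mul1r.
rewrite {1}(IH i.+1) {1}(IH i) negQpochS !coefM1X.
case: i => [|i] /=; rewrite !exprS; ring.
Qed.

Definition Acau (R : realFieldType) (Q : R) k b n :=
  cauchy (fun i => (negQpoch Q k)`_i) b n.

Lemma Abase (R : realFieldType) (Q : R) l n : 1 < Q ->
  Acau Q l (beta Q l) n = (-1) ^+ n - (n == 0%N)%:R.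
Proof.
move=> hQ; elim: l n => [|l IH] n.
  rewrite /Acau /cauchy negQpoch0 big_ord_recl big1 => [|i _]; last first.
    by rewrite coef1 /= mul0r.
  rewrite coef1 /= mul1r addr0 subn0.
  case: n => [|n] /=; first by rewrite expr0 subrr.
  by rewrite addn0 qbinomn0 // mulr1 subr0.
rewrite /Acau negQpochS L1a -L1b -IH /Acau.
apply: eq_cauchy => p; by rewrite -beta_rec.
Qed.

Lemma Astep (R : realFieldType) (Q : R) k b b' c n : 1 < Q ->
  (forall p, c * b' p = b p * (1 - Q ^+ (p + k.+1))) ->
  c * Acau Q k.+1 b' n =
  Acau Q k b n * (1 - Q ^+ k.+1 * Q ^+ n) + Q ^+ k.+1 * (1 - Q ^+ n) * prev (Acau Q k b) n.
Proof.
move=> hQ hb.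
have H1 : c * Acau Q k.+1 b' n =
   cauchy (fun i => (negQpoch Q k.+1)`_i) b n
   - Q ^+ k.+1 * Q ^+ n * cauchy (fun i => (negQpoch Q k * (1 + 1 *: 'X))`_i) b n.
  rewrite /Acau /cauchy !mulr_sumr -sumrB; apply: eq_bigr => i _.
  rewrite mulrCA hb EQ2.
  have e : Q ^+ n = Q ^+ i * Q ^+ (n - i) by rewrite -exprD subnKC //; have := ltn_ord i; lia.
  rewrite exprD e; ring.
rewrite H1 negQpochS L1a L1a /Acau; ring.
Qed.

Lemma F2form (R : realFieldType) (Q : R) k l n : (l <= k)%N ->
  F2 Q k l n = qbinom Q k l * (-1) ^+ n - Q ^+ ('C(n.+1, 2) + l * n) * qbinom Q k (l + n).
Proof.
move=> hlk; rewrite /F2 hlk /=; case: ifP => h //.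
rewrite [qbinom Q k (l + n)]qbinom0 ?mulr0 ?subr0 //; move/negbT: h; rewrite -ltnNge; lia.
Qed.

Lemma F2rec (R : realFieldType) (Q : R) k l n : 1 < Q -> (l <= k)%N ->
  (1 - Q ^+ (k.+1 - l)) * F2 Q k.+1 l n =
  F2 Q k l n * (1 - Q ^+ k.+1 * Q ^+ n) + Q ^+ k.+1 * (1 - Q ^+ n) * prev (F2 Q k l) n.
Proof.
move=> hQ hlk.
have hlk1 : (l <= k.+1)%N by lia.
rewrite !F2form //.
case: n => [|n] /=.
  by rewrite bin_small // !addn0 muln0 !expr0; ring.
rewrite F2form // Q1 // F2poly //.
have -> : Q ^+ ('C(n.+2, 2) + l * n.+1) = Q ^+ ('C(n.+1, 2) + l * n) * Q ^+ (n.+1 + l).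
  by rewrite -exprD; congr (_ ^+ _); rewrite binS bin1; lia.
have hQ0 : Q != 0 by apply/negP => /eqP h; move: hQ; rewrite h ltr10.
have hc : 1 - Q ^+ (k.+1 - l) != 0 by apply: fac_neq0 => //; lia.
rewrite [(-1) ^+ n.+1]exprS.
by field; nz.
Qed.

Lemma F2base (R : realFieldType) (Q : R) l n : 1 < Q ->
  F2 Q l l n = (-1) ^+ n - (n == 0%N)%:R.
Proof.
move=> hQ; rewrite F2form // qbinomnn //.
case: n => [|n] /=; first by rewrite muln0 addn0 expr0 addn0 qbinomnn // mulr1.
rewrite qbinom0 ?mulr0 ?subr0 ?mul1r //; lia.
Qed.

Unset Implicit Arguments.

Theorem lemma3p6 (R : realFieldType) (Q : R) (k l : nat) :
  1 < Q -> (1 <= l)%N ->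
  forall n : nat, F2 Q k l n = - Fconst Q k l * F1 Q k l n.
Proof.
move=> hQ _.
have E : forall k n, - Fconst Q k l * F1 Q k l n = Acau Q k (bb Q k l) n.
  move=> k' n; rewrite /F1 /Acau /cauchy /bb mulr_sumr.
  by apply: eq_bigr => i _; rewrite mulrCA.
case: (ltnP k l) => hkl.
  move=> n; rewrite /F2 /Fconst qbinom0 // leqNgt hkl /= mul0r subr0 oppr0 !mul0r.
  by [].
have [d ->] : exists d, k = (l + d)%N by exists (k - l)%N; lia.
elim: d => [|d IH] n.
  rewrite addn0 E F2base // -(@Abase _ Q l n hQ) /Acau.
  by apply: eq_cauchy => p; rewrite bb_base.
rewrite E.
have hc : 1 - Q ^+ ((l + d).+1 - l) != 0 by apply: fac_neq0 => //; lia.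
apply: (mulfI hc).
rewrite addnS F2rec // ?leq_addr //.
rewrite (Astep (b := bb Q (l + d) l)) //; last first.
  by move=> p; rewrite bbrec //; lia.
have IH' : forall m, F2 Q (l + d) l m = Acau Q (l + d) (bb Q (l + d) l) m.
  by move=> m; rewrite IH E.
rewrite IH'; congr (_ + _); case: n => [|n] //=.
by rewrite IH'.
Qed.
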